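(* Let $R$ be a ring such that whenever $a,b\in R$ satisfy $a+b=1$, there exist $r,s\in R$ with $(1+ar)R(1+bs)\subseteq J(R)$. Then $R$ is feckly clean if and only if $\operatorname{Max}(R)$ is strongly zero-dimensional.
   Context: Rings are associative with identity, not necessarily commutative; ideals are two-sided; $J(R)$ is the Jacobson radical. An element $u\in R$ is full if $RuR=R$. An element $a\in R$ is feckly clean if there exist $e\in R$ and a full element $u\in R$ with $a=e+u$ and $eR(1-e)\subseteq J(R)$; $R$ is feckly clean if every element is feckly clean. $\operatorname{Max}(R)$ is the set of all maximal ideals of $R$, topologized so that the closed sets are exactly the sets $V(I)=\{P\in\operatorname{Max}(R): I\subseteq P\}$ for ideals $I$. A topological space $X$ is strongly zero-dimensional if for any two disjoint closed sets $A,B\subseteq X$ there exist disjoint clopen sets $C_1,C_2$ with $A\subseteq C_1$ and $B\subseteq C_2$. *)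

(* Defs.v *)
(* Rings: pzRingType (associative, with identity, not necessarily
   commutative; the zero ring is allowed). Subsets of R are predicates R -> Prop. *)
From HB Require Import structures.
From mathcomp Require Import all_boot all_order all_algebra.
Set Implicit Arguments. Unset Strict Implicit. Unset Printing Implicit Defensive.
Import GRing.Theory.
Local Open Scope ring_scope.

Section Defs.
Variable R : pzRingType.

Definition left_ideal (L : R -> Prop) : Prop :=
  L 0 /\ (forall x y, L x -> L y -> L (x + y)) /\ (forall r x, L x -> L (r * x)).

Definition maximal_left_ideal (L : R -> Prop) : Prop :=
  left_ideal L /\ ~ L 1 /\
  forall L' : R -> Prop, left_ideal L' -> ~ L' 1 -> (forall x, L x -> L' x) ->
    forall x, L' x -> L x.

Definition jacobson (x : R) : Prop :=
  forall L, maximal_left_ideal L -> L x.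

Definition ideal (I : R -> Prop) : Prop :=
  I 0 /\ (forall x y, I x -> I y -> I (x + y)) /\
  (forall r x, I x -> I (r * x)) /\ (forall r x, I x -> I (x * r)).

Definition maximal_ideal (P : R -> Prop) : Prop :=
  ideal P /\ ~ P 1 /\
  forall Q : R -> Prop, ideal Q -> ~ Q 1 -> (forall x, P x -> Q x) ->
    forall x, Q x -> P x.

(* u is full: RuR = R, where RuR is the set of finite sums of elements r u s *)
Definition full (u : R) : Prop :=
  forall x : R, exists s : seq (R * R), x = \sum_(p <- s) p.1 * u * p.2.

Definition feckly_clean_elt (a : R) : Prop :=
  exists e u : R, a = e + u /\ full u /\ (forall r, jacobson (e * r * (1 - e))).

Definition feckly_clean : Prop := forall a : R, feckly_clean_elt a.

(* Subsets of Max(R) are predicates on (R -> Prop); only their values on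
   maximal ideals matter. *)
Definition Max_closed (A : (R -> Prop) -> Prop) : Prop :=
  exists I, ideal I /\
    forall P, maximal_ideal P -> (A P <-> (forall x, I x -> P x)).

Definition Max_clopen (A : (R -> Prop) -> Prop) : Prop :=
  Max_closed A /\ Max_closed (fun P => ~ A P).

Definition Max_strongly_zero_dim : Prop :=
  forall A B : (R -> Prop) -> Prop,
    Max_closed A -> Max_closed B ->
    (forall P, maximal_ideal P -> ~ (A P /\ B P)) ->
    exists C1 C2 : (R -> Prop) -> Prop,
      Max_clopen C1 /\ Max_clopen C2 /\
      (forall P, maximal_ideal P -> ~ (C1 P /\ C2 P)) /\
      (forall P, maximal_ideal P -> A P -> C1 P) /\
      (forall P, maximal_ideal P -> B P -> C2 P).

End Defs.

(* Main.v *)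
Require Import Defs.
From HB Require Import structures.
From mathcomp Require Import all_boot all_order all_algebra.
From mathcomp Require Import boolp classical_sets.
Import GRing.Theory.
Set Implicit Arguments. Unset Strict Implicit. Unset Printing Implicit Defensive.
Local Open Scope ring_scope.

Lemma zorn_gen (T : Type) (Cl : (T -> Prop) -> Prop) (I0 : T -> Prop) (x0 : T) :
  Cl I0 -> I0 x0 ->
  (forall F : (T -> Prop) -> Prop, (exists X, F X) -> (forall X, F X -> Cl X) ->
     (forall X Y, F X -> F Y -> (forall t, X t -> Y t) \/ (forall t, Y t -> X t)) ->
     Cl (fun t => exists X, F X /\ X t)) ->
  exists M, Cl M /\ (forall x, I0 x -> M x) /\
    (forall N, Cl N -> (forall x, M x -> N x) -> forall x, N x -> M x).
Proof.
move=> ClI0 I0x0 Hch.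
pose P := fun X : T -> Prop => X = set0 \/ (Cl X /\ (forall x, I0 x -> X x)).
have [A [PA maxA]] : exists A, P A /\ forall B, (A `<` B)%classic -> ~ P B.
  apply: Zorn_bigcup => F FP tot.
  case: (pselect (exists X, F X /\ X <> set0)) => [[X0 [FX0 X0n]]|none].
  - right.
    pose F' := fun X => F X /\ X <> set0.
    have -> : (\bigcup_(X in F) X)%classic = (fun t => exists X, F' X /\ X t).
      apply/seteqP; split => t.
      + move=> [X FX Xt]; exists X; split => //; split => //.
        by move=> X0e; rewrite X0e in Xt.
      + by move=> [X [[FX _] Xt]]; exists X.
    have ClF' : forall X, F' X -> Cl X /\ (forall x, I0 x -> X x).
      by move=> X [FX Xn]; case: (FP X FX).
    split.
    + apply: Hch.
      * by exists X0.
      * by move=> X /ClF' [].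
      * move=> X Y [FX _] [FY _]; case: (tot X Y FX FY) => h; [left|right]; exact: h.
    + move=> x I0x; exists X0; split; first by [].
      by have [_ ] := ClF' X0 (conj FX0 X0n); apply.
  - left; apply/seteqP; split => t //.
    move=> [X FX Xt]; exfalso; apply: none; exists X; split => //.
    by move=> Xe; rewrite Xe in Xt.
case: PA => [A0|[ClA I0A]].
  exfalso; apply: (maxA I0) _ (or_intror (conj ClI0 (fun x h => h))).
  rewrite A0; split; first by move=> t [].
  by move=> h; exact: (h x0 I0x0).
exists A; split => //; split => // N ClN AN x Nx.
case: (pselect (forall t, N t -> A t)) => [h|h]; first exact: h.
exfalso; apply: (maxA N); first by split.
by right; split => // y /I0A /AN.
Qed.
Section Ring.
Variable R : pzRingType.
Implicit Types (L P : R -> Prop) (x y z a b c : R).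

Definition closedP (two : bool) (X : R -> Prop) :=
  X 0 /\ (forall x y, X x -> X y -> X (x + y)) /\ (forall r x, X x -> X (r * x)) /\
  (two -> forall r x, X x -> X (x * r)) /\ ~ X 1.

Lemma zorn_closed two (I0 : R -> Prop) : closedP two I0 ->
  exists M, closedP two M /\ (forall x, I0 x -> M x) /\
    (forall N, closedP two N -> (forall x, M x -> N x) -> forall x, N x -> M x).
Proof.
move=> CI0; apply: (@zorn_gen _ _ _ 0) => //; first by case: CI0.
move=> F [X0 FX0] FC tot; split; [|split; [|split; [|split]]].
- by exists X0; split => //; case: (FC _ FX0).
- move=> x y [X [FX Xx]] [Y [FY Yy]].
  case: (tot X Y FX FY) => h.
  + exists Y; split => //; have [_ [H _]] := FC _ FY; exact: H (h _ Xx) Yy.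
  + exists X; split => //; have [_ [H _]] := FC _ FX; exact: H Xx (h _ Yy).
- move=> r x [X [FX Xx]]; exists X; split => //; have [_ [_ [H _]]] := FC _ FX; exact: H.
- move=> tw r x [X [FX Xx]]; exists X; split => //; have [_ [_ [_ [H _]]]] := FC _ FX; exact: H.
- by move=> [X [FX X1]]; have [_ [_ [_ [_ H]]]] := FC _ FX; exact: H.
Qed.

Lemma left_ideal_closed L : left_ideal L -> ~ L 1 -> closedP false L.
Proof. by move=> [h0 [hD hM]] n1; do !split. Qed.

Lemma ideal_closed L : ideal L -> ~ L 1 -> closedP true L.
Proof. by move=> [h0 [hD [hM hM']]] n1; do !split. Qed.

Lemma zorn_left L : left_ideal L -> ~ L 1 ->
  exists M, maximal_left_ideal M /\ forall x, L x -> M x.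
Proof.
move=> lL nL; have [M [[h0 [hD [hM [_ n1]]]] [LM Mmax]]] := zorn_closed (left_ideal_closed lL nL).
exists M; split => //; split; first by do !split.
split => // L' lL' nL' ML'; apply: Mmax => //; exact: left_ideal_closed.
Qed.

Lemma zorn_ideal L : ideal L -> ~ L 1 ->
  exists M, maximal_ideal M /\ forall x, L x -> M x.
Proof.
move=> lL nL; have [M [[h0 [hD [hM [hM' n1]]]] [LM Mmax]]] := zorn_closed (ideal_closed lL nL).
exists M; split => //; split; first by do !split => //; exact: hM'.
split => // L' lL' nL' ML'; apply: Mmax => //; exact: ideal_closed.
Qed.

End Ring.
Section Struct.
Variable R : pzRingType.
Implicit Types (L P : R -> Prop) (x y z a b c w : R).

Lemma li_N L x : left_ideal L -> L x -> L (- x).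
Proof. by move=> [_ [_ hM]] Lx; rewrite -mulN1r; apply: hM. Qed.

Lemma li_D L x y : left_ideal L -> L x -> L y -> L (x + y).
Proof. by move=> [_ [hD _]]; apply: hD. Qed.

Lemma li_B L x y : left_ideal L -> L x -> L y -> L (x - y).
Proof. by move=> lL Lx Ly; apply: li_D => //; apply: li_N. Qed.

Lemma li_M L r x : left_ideal L -> L x -> L (r * x).
Proof. by move=> [_ [_ hM]]; apply: hM. Qed.

Lemma li_0 L : left_ideal L -> L 0.
Proof. by case. Qed.

Lemma max_inv L z : maximal_left_ideal L -> ~ L z -> exists c, L (1 - c * z).
Proof.
move=> [lL [nL1 Lmax]] nLz.
pose L' := fun w => exists l c, L l /\ w = l + c * z.
have lL' : left_ideal L'.
  split; [|split].
  - by exists 0, 0; split; [exact: li_0|rewrite mul0r addr0].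
  - move=> x y [l1 [c1 [L1 ->]]] [l2 [c2 [L2 ->]]].
    exists (l1 + l2), (c1 + c2); split; first exact: li_D.
    by rewrite mulrDl addrACA.
  - move=> r x [l [c [Ll ->]]]; exists (r * l), (r * c); split; first exact: li_M.
    by rewrite mulrDr mulrA.
case: (pselect (L' 1)) => [[l [c [Ll e]]]|n1].
  by exists c; rewrite e addrK.
exfalso; apply: nLz; apply: (Lmax L') => //.
- by move=> x Lx; exists x, 0; rewrite mul0r addr0.
- by exists 0, 1; rewrite mul1r add0r; split => //; exact: li_0.
Qed.

Lemma max_shift L w : maximal_left_ideal L -> ~ L w ->
  maximal_left_ideal (fun z => L (z * w)).
Proof.
move=> mL nLw; have [lL [nL1 Lmax]] := mL.
have lLw : left_ideal (fun z => L (z * w)).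
  split; [|split].
  - by rewrite mul0r; exact: li_0.
  - by move=> x y Lx Ly; rewrite mulrDl; exact: li_D.
  - by move=> r x Lx; rewrite -mulrA; exact: li_M.
split => //; split; first by rewrite mul1r.
move=> L' lL' nL' sub x L'x.
case: (pselect (L (x * w))) => // nxw.
have [c Lc] := max_inv mL nxw.
exfalso; apply: nL'.
have h1 : L' (w * c * x - 1).
  apply: sub; rewrite mulrBl mul1r -!mulrA.
  have -> : w * (c * (x * w)) - w = - (w * (1 - c * (x * w))).
    by rewrite mulrBr mulr1 opprB.
  by apply: li_N => //; exact: li_M.
have h2 : L' (w * c * x) by exact: li_M.
by have := li_B lL' h2 h1; rewrite opprB addrC subrK.
Qed.

Lemma jac_right L j w : maximal_left_ideal L -> jacobson j -> L (j * w).
Proof.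
move=> mL hj; case: (pselect (L w)) => [Lw|nLw].
  by apply: li_M => //; case: mL.
exact: (hj _ (max_shift mL nLw)).
Qed.

Definition Zr L a := forall w, L (a * w).
Definition RI L a := exists r, Zr L (a * r - 1).

Lemma Z_D L a b : left_ideal L -> Zr L a -> Zr L b -> Zr L (a + b).
Proof. by move=> lL Za Zb w; rewrite mulrDl; exact: li_D. Qed.
Lemma Z_N L a : left_ideal L -> Zr L a -> Zr L (- a).
Proof. by move=> lL Za w; rewrite mulNr; exact: li_N. Qed.
Lemma Z_B L a b : left_ideal L -> Zr L a -> Zr L b -> Zr L (a - b).
Proof. by move=> lL Za Zb; apply: Z_D => //; exact: Z_N. Qed.
Lemma Z_Ml L r a : left_ideal L -> Zr L a -> Zr L (r * a).
Proof. by move=> lL Za w; rewrite -mulrA; exact: li_M. Qed.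
Lemma Z_Mr L r a : Zr L a -> Zr L (a * r).
Proof. by move=> Za w; rewrite -mulrA. Qed.
Lemma Z_L L a : Zr L a -> L a.
Proof. by move=> Za; have := Za 1; rewrite mulr1. Qed.

End Struct.
Section HR.
Variable R : pzRingType.
Hypothesis hR : forall a b : R, a + b = 1 ->
        exists r s : R, forall t : R, jacobson ((1 + a * r) * t * (1 + b * s)).
Implicit Types (L P : R -> Prop) (x y z a b c w : R).

Lemma dich L a : maximal_left_ideal L -> RI L a \/ RI L (1 - a).
Proof.
move=> mL; have lL := mL.1.
have e1 : a + (1 - a) = 1 by rewrite addrC subrK.
have [r [s hj]] := hR e1.
set u := 1 + a * r; set v := 1 + (1 - a) * s.
case: (pselect (Zr L v)) => [Zv|nZv].
  right; exists (- s).
  have -> : (1 - a) * - s - 1 = - v by rewrite /v mulrN -opprD addrC.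
  exact: Z_N.
have [w0 nw0] : exists w0, ~ L (v * w0).
  case: (pselect (exists w0, ~ L (v * w0))) => // h; exfalso; apply: nZv => w.
  by case: (pselect (L (v * w))) => // hw; exfalso; apply: h; exists w.
have [c Lc] := max_inv mL nw0.
have Zu : Zr L u.
  move=> t.
  have -> : u * t = u * t * (1 - c * (v * w0)) + (u * (t * c) * v) * w0.
    by rewrite mulrBr mulr1 !mulrA subrK.
  apply: li_D => //; first exact: li_M.
  exact: jac_right.
left; exists (- r).
have -> : a * - r - 1 = - u by rewrite /u mulrN -opprD addrC.
exact: Z_N.
Qed.

Lemma id1 (e z : R) : e = (e - e * e) * z - e * ((1 - e) * z - 1).
Proof. by rewrite mulrBr mulr1 mulrA mulrBr mulr1 opprB addrC subrK. Qed.
Lemma id2 (q : R) : 1 = q * q - (q - 1) - q * (q - 1).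
Proof. by rewrite mulrBr mulr1 opprB opprB addrC addrA subrK addrC subrK. Qed.
Lemma id3 (x w c : R) : x * w * c - x * w * c * (x * w * c) = x * w * (- (c * x * w - 1)) * c.
Proof. by rewrite opprB mulrBr mulr1 mulrBl -!mulrA. Qed.

Lemma notRI_l L x c : maximal_left_ideal L -> ~ RI L x -> ~ RI L (c * x).
Proof.
move=> mL nRx [w Zw]; have lL := mL.1; have nL1 := mL.2.1.
set e := x * w * c.
case: (dich e mL) => [[r Zr']|[z Zz]].
  by apply: nRx; exists (w * c * r); rewrite !mulrA.
have Ze2 : Zr L (e - e * e).
  rewrite /e id3.
  by apply: Z_Mr; apply: Z_Ml => //; apply: Z_N.
have Ze : Zr L e.
  rewrite (id1 e z).
  by apply: Z_B => //; [apply: Z_Mr|apply: Z_Ml].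
set q := c * x * w.
have Zq : Zr L (q * q).
  have -> : q * q = c * e * x * w by rewrite /q /e !mulrA.
  by apply: Z_Mr; apply: Z_Mr; apply: Z_Ml.
apply: nL1; apply: Z_L.
rewrite (id2 q).
by apply: Z_B => //; [apply: Z_B|apply: Z_Ml].
Qed.

Lemma RI_left L y z : maximal_left_ideal L -> Zr L (y * z - 1) -> Zr L (z * y - 1).
Proof.
move=> mL Zyz; have lL := mL.1.
case: (pselect (RI L z)) => [[w Zw]|nRz]; last first.
  by exfalso; apply: (@notRI_l L z y mL nRz); exists 1; rewrite mulr1.
have Zyw : Zr L (y - w).
  have -> : y - w = (y * z - 1) * w - y * (z * w - 1).
    by rewrite mulrBl mul1r mulrBr mulr1 mulrA opprB [in RHS]addrC addrA subrK.
  by apply: Z_B => //; [apply: Z_Mr|apply: Z_Ml].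
have -> : z * y - 1 = z * (y - w) + (z * w - 1).
  by rewrite mulrBr addrA subrK.
by apply: Z_D => //; apply: Z_Ml.
Qed.

Lemma notRI_Z L x : maximal_left_ideal L -> ~ RI L x -> Zr L x.
Proof.
move=> mL nRx; have lL := mL.1.
case: (pselect (Zr L x)) => // nZx.
have [n nxn] : exists n, ~ L (x * n).
  case: (pselect (exists n, ~ L (x * n))) => // h; exfalso; apply: nZx => w.
  by case: (pselect (L (x * w))) => // hw; exfalso; apply: h; exists w.
have [c' Lc'] := max_inv mL nxn.
set c := n * c'.
have h : L ((1 - c * x) * n).
  have -> : (1 - c * x) * n = n * (1 - c' * (x * n)).
    by rewrite /c mulrBl mul1r mulrBr mulr1 !mulrA.
  exact: li_M.
have nR := @notRI_l L x c mL nRx.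
exfalso; case: (dich (c * x) mL) => [/nR//|[z Zz]].
have Zl := RI_left mL Zz.
apply: nxn; apply: li_M => //.
have -> : n = z * ((1 - c * x) * n) - (z * (1 - c * x) - 1) * n.
  by move: (1 - c * x) => A; rewrite mulrBl mul1r mulrA opprB addrC subrK.
apply: li_B => //; exact: li_M.
Qed.

Lemma max_right L x t : maximal_left_ideal L -> L x -> L (x * t).
Proof.
move=> mL Lx; have lL := mL.1.
case: (pselect (RI L x)) => [[z Zz]|nR]; last exact: notRI_Z.
have Zl := RI_left mL Zz.
exfalso; apply: mL.2.1.
have -> : (1 : R) = z * x - (z * x - 1) by rewrite opprB addrC subrK.
apply: li_B => //; [exact: li_M|exact: Z_L].
Qed.

Lemma maxl_ideal L : maximal_left_ideal L -> ideal L.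
Proof.
move=> mL; have [h0 [hD hM]] := mL.1.
split; first done; split; first done; split; first done.
by move=> r x Lx; apply: max_right.
Qed.

Lemma maxl_maxi L : maximal_left_ideal L -> maximal_ideal L.
Proof.
move=> mL; split; first exact: maxl_ideal.
split; first exact: mL.2.1.
move=> Q [q0 [qD [qM _]]] nQ LQ; apply: mL.2.2 => //; by do !split.
Qed.

Lemma maxi_maxl P : maximal_ideal P -> maximal_left_ideal P.
Proof.
move=> [[p0 [pD [pM pM']]] [nP1 Pmax]].
have lP : left_ideal P by do !split.
have [L [mL PL]] := zorn_left lP nP1.
have LP : forall x, L x -> P x.
  apply: Pmax; [exact: maxl_ideal|exact: mL.2.1|exact: PL].
split => //; split => // L' lL' nL' PL' x L'x.
have LL' : forall y, L y -> L' y by move=> y Ly; exact: (PL' y (LP y Ly)).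
exact: (LP x (mL.2.2 L' lL' nL' LL' x L'x)).
Qed.

Lemma maxi_jac P j : maximal_ideal P -> jacobson j -> P j.
Proof. by move=> mP hj; apply: hj; apply: maxi_maxl. Qed.

End HR.

Lemma maxl_prime (R : pzRingType) (L : R -> Prop) (a b : R) :
  maximal_left_ideal L -> (forall t, L (a * t * b)) -> L a \/ L b.
Proof.
move=> mL h; have lL := mL.1.
case: (pselect (L b)) => [|nb]; first by right.
left; have [c Lc] := max_inv mL nb.
have -> : a = a * (1 - c * b) + a * c * b by rewrite mulrBr mulr1 mulrA subrK.
by apply: li_D => //; apply: li_M.
Qed.
Section Gen.
Variable R : pzRingType.
Implicit Types (P I K : R -> Prop) (x y z a b e u : R).

Definition gen z : R -> Prop :=
  fun x => exists s : seq (R * R), x = \sum_(p <- s) p.1 * z * p.2.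

Lemma gen_ideal z : ideal (gen z).
Proof.
split; [|split; [|split]].
- by exists [::]; rewrite big_nil.
- move=> x y [s1 ->] [s2 ->]; exists (s1 ++ s2); by rewrite big_cat.
- move=> r x [s ->]; exists [seq (r * p.1, p.2) | p <- s].
  rewrite big_map mulr_sumr; apply: eq_bigr => p _ /=; by rewrite !mulrA.
- move=> r x [s ->]; exists [seq (p.1, p.2 * r) | p <- s].
  rewrite big_map mulr_suml; apply: eq_bigr => p _ /=; by rewrite !mulrA.
Qed.

Lemma gen_self z : gen z z.
Proof. by exists [:: (1, 1)]; rewrite big_cons big_nil /= mul1r mulr1 addr0. Qed.

Lemma gen_sub P z x : ideal P -> P z -> gen z x -> P x.
Proof.
move=> [p0 [pD [pM pM']]] Pz [s ->]; elim: s => [|p s IH]; first by rewrite big_nil.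
by rewrite big_cons; apply: pD => //; apply: pM'; apply: pM.
Qed.

Lemma gen_all z : gen z 1 -> forall x, gen z x.
Proof. by move=> g1 x; rewrite -(mul1r x); have [_ [_ [_ h]]] := gen_ideal z; apply: h. Qed.

Lemma closed_elt z : Max_closed (fun P => P z).
Proof.
exists (gen z); split; first exact: gen_ideal.
move=> P [iP _]; split; first by move=> Pz x; apply: gen_sub.
by move=> h; apply: h; apply: gen_self.
Qed.

Lemma closed_ext (A A' : (R -> Prop) -> Prop) :
  (forall P, maximal_ideal P -> (A P <-> A' P)) -> Max_closed A' -> Max_closed A.
Proof.
move=> hAA [I [iI h]]; exists I; split => // P mP.
by rewrite (propext (hAA P mP)); apply: h.
Qed.

Lemma sum_one I K : ideal I -> ideal K ->
  (forall P, maximal_ideal P -> ~ ((forall x, I x -> P x) /\ (forall x, K x -> P x))) ->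
  exists a b, I a /\ K b /\ a + b = 1.
Proof.
move=> [i0 [iD [iM iM']]] [k0 [kD [kM kM']]] disj.
pose S := fun x => exists a b, I a /\ K b /\ x = a + b.
case: (pselect (S 1)) => [[a [b [Ia [Kb e]]]]|nS]; first by exists a, b.
have iS : ideal S.
  split; [|split; [|split]].
  - by exists 0, 0; rewrite addr0.
  - move=> x y [a [b [Ia [Kb ->]]]] [a' [b' [Ia' [Kb' ->]]]].
    by exists (a + a'), (b + b'); rewrite addrACA; do !split => //; [apply: iD|apply: kD].
  - move=> r x [a [b [Ia [Kb ->]]]]; exists (r * a), (r * b); rewrite mulrDr.
    by do !split => //; [apply: iM|apply: kM].
  - move=> r x [a [b [Ia [Kb ->]]]]; exists (a * r), (b * r); rewrite mulrDl.
    by do !split => //; [apply: iM'|apply: kM'].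
have [P [mP SP]] := zorn_ideal iS nS.
exfalso; apply: (disj P mP); split => x Hx; apply: SP.
- by exists x, 0; rewrite addr0.
- by exists 0, x; rewrite add0r.
Qed.

Lemma full_gen u : full u <-> forall x, gen u x.
Proof. by []. Qed.

Lemma maxi_1 P : maximal_ideal P -> ~ P 1.
Proof. by case=> _ []. Qed.

End Gen.
Theorem corollary3p7 (R : pzRingType)
  (hR : forall a b : R, a + b = 1 ->
        exists r s : R, forall t : R, jacobson ((1 + a * r) * t * (1 + b * s))) :
  feckly_clean R <-> Max_strongly_zero_dim R.
Proof.
have notfull : forall (P : R -> Prop) u, maximal_ideal P -> full u -> ~ P u.
  move=> P u mP fu Pu; apply: (maxi_1 mP); apply: (gen_sub mP.1 Pu); exact: fu.
split.
- move=> fc A B [I [iI hA]] [K [iK hB]] disj.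
  have [a [b [Ia [Kb ab1]]]] : exists a b, I a /\ K b /\ a + b = 1.
    apply: sum_one => // P mP [IP KP]; apply: (disj P mP).
    by split; [exact: ((hA P mP).2 IP)|exact: ((hB P mP).2 KP)].
  have [e [u [aeu [fu je]]]] := fc a.
  have ue : u = a - e by rewrite aeu (addrC e u) addrK.
  have dich : forall P, maximal_ideal P -> P e \/ P (1 - e).
    move=> P mP; apply: (maxl_prime (maxi_maxl hR mP)) => t.
    exact: (maxi_jac hR mP (je t)).
  have nboth : forall P, maximal_ideal P -> P e -> P (1 - e) -> False.
    move=> P mP Pe P1e; apply: (maxi_1 mP).
    have [_ [pD _]] := mP.1; by have := pD _ _ Pe P1e; rewrite addrC subrK.
  exists (fun P => P (1 - e)), (fun P => P e).
  split; [|split; [|split; [|split]]].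
  + split; first exact: closed_elt.
    apply: (closed_ext (A' := fun P => P e)); last exact: closed_elt.
    move=> P mP; split => [n|Pe].
    * by case: (dich P mP).
    * by move=> P1e; apply: (nboth P mP).
  + split; first exact: closed_elt.
    apply: (closed_ext (A' := fun P => P (1 - e))); last exact: closed_elt.
    move=> P mP; split => [n|P1e].
    * by case: (dich P mP).
    * by move=> Pe; apply: (nboth P mP).
  + by move=> P mP [P1e Pe]; apply: (nboth P mP).
  + move=> P mP AP; have Pa : P a by exact: ((hA P mP).1 AP a Ia).
    case: (dich P mP) => // Pe; exfalso; apply: (notfull P u mP fu).
    rewrite ue; have [_ [pD [pM _]]] := mP.1; apply: pD => //.
    by rewrite -mulN1r; apply: pM.
  + move=> P mP BP; have Pb : P b by exact: ((hB P mP).1 BP b Kb).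
    case: (dich P mP) => // P1e; exfalso; apply: (notfull P u mP fu).
    have -> : u = (1 - e) - b by rewrite ue -ab1 addrAC addrK.
    have [_ [pD [pM _]]] := mP.1; apply: pD => //.
    by rewrite -mulN1r; apply: pM.
- move=> szd a.
  have disj : forall P, maximal_ideal P -> ~ (P a /\ P (1 - a)).
    move=> P mP [Pa P1a]; apply: (maxi_1 mP).
    have [_ [pD _]] := mP.1; by have := pD _ _ Pa P1a; rewrite addrC subrK.
  have [C1 [C2 [[[I1 [iI1 h1]] [I2 [iI2 h2]]] [_ [dC [AC1 BC2]]]]]] :=
    szd _ _ (closed_elt a) (closed_elt (1 - a)) disj.
  have [x [y [I1x [I2y xy1]]]] : exists x y, I1 x /\ I2 y /\ x + y = 1.
    apply: sum_one => // P mP [IP KP].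
    exact: ((h2 P mP).2 KP ((h1 P mP).2 IP)).
  have [r [s hj]] := hR x y xy1.
  set e := 1 + x * r.
  have offC1 : forall P, maximal_ideal P -> ~ C1 P -> P e.
    move=> P mP nC; have Py : P y by exact: ((h2 P mP).1 nC y I2y).
    case: (maxl_prime (maxi_maxl hR mP) (fun t => maxi_jac hR mP (hj t))) => [//|P1].
    exfalso; apply: (maxi_1 mP); have [_ [pD [pM pM']]] := mP.1.
    have -> : (1 : R) = (1 + y * s) - y * s by rewrite addrK.
    apply: pD => //; rewrite -mulN1r; apply: pM; exact: pM'.
  have onC1 : forall P, maximal_ideal P -> C1 P -> P (x * r).
    move=> P mP hC; have Px : P x by exact: ((h1 P mP).1 hC x I1x).
    by have [_ [_ [_ pM']]] := mP.1; apply: pM'.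
  exists e, (a - e); split; first by rewrite addrC subrK.
  split.
  + apply/full_gen; case: (pselect (gen (a - e) 1)) => [g1|ng1]; first exact: gen_all.
    have [P [mP GP]] := zorn_ideal (gen_ideal (a - e)) ng1.
    have Pu : P (a - e) by apply: GP; apply: gen_self.
    exfalso; have [_ [pD [pM _]]] := mP.1.
    case: (pselect (C1 P)) => hC.
    * apply: (dC P mP); split => //; apply: BC2 => //.
      have -> : 1 - a = - ((a - e) + x * r).
        have h : (a - e) + x * r = a - 1 by rewrite /e opprD addrA subrK.
        by rewrite h opprB.
      rewrite -mulN1r; apply: pM; apply: pD => //; exact: onC1.
    * apply: (hC); apply: AC1 => //.
      have -> : a = (a - e) + e by rewrite subrK.
      by apply: pD => //; exact: (offC1 P mP hC).
  + move=> t L mL; have mP := maxl_maxi hR mL.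
    case: (pselect (C1 L)) => hC.
    * have -> : 1 - e = - (x * r) by rewrite /e opprD addrA subrr add0r.
      apply: (li_M _ mL.1); apply: (li_N mL.1); exact: onC1.
    * rewrite -mulrA; apply: (max_right hR _ mL); exact: (offC1 L mP hC).
Qed.
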